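(* Let $X$ be a real Hilbert space with inner product $\langle\cdot,\cdot\rangle_X$, let $E\colon X\to\mathbb R$ be a twice differentiable convex energy, and let $P\colon\mathbb R^p\to X$, $\theta\mapsto u_\theta$, be a differentiable parametrization. Set $L(\theta)\coloneqq E(u_\theta)$, let $\nabla L(\theta)\in\mathbb R^p$ be its Euclidean gradient, define the energy Gram matrix $G_E(\theta)\in\mathbb R^{p\times p}$ by $G_E(\theta)_{ij}\coloneqq D^2E(u_\theta)(\partial_{\theta_i}u_\theta,\partial_{\theta_j}u_\theta)$, and define the energy natural gradient $\nabla^E L(\theta)\coloneqq G_E(\theta)^+\nabla L(\theta)$. Let $T_\theta\mathcal F_\Theta\coloneqq\operatorname{span}\{\partial_{\theta_i}u_\theta : i=1,\dots,p\}\subseteq X$ and let $DP_\theta\colon\mathbb R^p\to X$ denote the derivative of $P$ at $\theta$. (i) If $D^2E(u)$ is coercive for every $u\in X$, then $$DP_\theta\nabla^EL(\theta) = \Pi_{T_\theta \mathcal F_\Theta}^{D^2E(u_\theta)}\big(D^2E(u_\theta)^{-1} \nabla E(u_\theta)\big),$$ where $D^2E(u_\theta)$ is identified (via the Riesz representation) with an operator $X\to X$, $\nabla E(u_\theta)\in X$ is the gradient of $E$ with respect to $\langle\cdot,\cdot\rangle_X$, and $\Pi_{T_\theta \mathcal F_\Theta}^{D^2E(u_\theta)}$ denotes the orthogonal projection onto $T_\theta\mathcal F_\Theta$ with respect to the inner product $(v,w)\mapsto D^2E(u_\theta)(v,w)$. (ii) If $E$ is a quadratic function whose second derivative $D^2E=a$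 is a bounded, positive definite symmetric bilinear form on $X$, and $E$ admits a minimizer $u^*\in X$, then $$DP_\theta\nabla^EL(\theta) = \Pi_{T_\theta \mathcal F_\Theta}^{a}( u_\theta - u^* ),$$ where $\Pi_{T_\theta \mathcal F_\Theta}^{a}$ denotes the orthogonal projection onto $T_\theta\mathcal F_\Theta$ with respect to the inner product $a$.
   Context: For a matrix $A$, $A^+$ denotes any pseudo-inverse of $A$ (a generalized inverse, i.e. a matrix with $AA^+A=A$). For a finite-dimensional subspace $V$ of a vector space with inner product $b$, the projection $\Pi^b_V(x)$ is the unique element of $V$ with $b(\Pi^b_V(x),z)=b(x,z)$ for all $z\in V$. *)

(* Defs.v *)
From HB Require Import structures.
From mathcomp Require Import all_boot all_order all_algebra.
From mathcomp Require Import all_classical all_reals all_analysis.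
Set Implicit Arguments. Unset Strict Implicit. Unset Printing Implicit Defensive.
Import Order.TTheory GRing.Theory Num.Theory.
Import numFieldNormedType.Exports.
Local Open Scope ring_scope.

Section Defs.
Context {R : realType} {X : normedModType R}.

(* ip is an inner product on X inducing the norm of X (so a complete X is a
   real Hilbert space). Linearity in the second argument follows by symmetry. *)
Definition is_inner_product (ip : X -> X -> R) : Prop :=
  [/\ forall x y, ip x y = ip y x,
      forall (c : R) x y z, ip (c *: x + y) z = c * ip x z + ip y z
    & forall x, ip x x = `|x| ^+ 2].

Definition is_bilin_form (a : X -> X -> R) : Prop :=
  (forall (c : R) x y z, a (c *: x + y) z = c * a x z + a y z) /\
  (forall (c : R) x y z, a x (c *: y + z) = c * a x y + a x z).

Definition symm_form (a : X -> X -> R) : Prop := forall x y, a x y = a y x.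

Definition bounded_form (a : X -> X -> R) : Prop :=
  exists C : R, forall x y, `|a x y| <= C * `|x| * `|y|.

Definition posdef_form (a : X -> X -> R) : Prop := forall x, x != 0 -> 0 < a x x.

Definition coercive_form (a : X -> X -> R) : Prop :=
  exists c : R, 0 < c /\ forall x, c * `|x| ^+ 2 <= a x x.

Definition convex_fun (E : X -> R) : Prop :=
  forall u v (t : R), 0 <= t <= 1 ->
    E ((1 - t) *: u + t *: v) <= (1 - t) * E u + t * E v.

Definition is_gradient (ip : X -> X -> R) (E : X -> R) (g : X -> X) : Prop :=
  forall u, differentiable E u /\ forall v, 'd E u v = ip (g u) v.

(* D^2E(u)(v,w) = D(DE)(u)(v)(w) = <Dg(u) v, w>, where g is the gradient of E;
   'd g u is the Riesz-identified operator D^2E(u) : X -> X. *)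
Definition hessian (ip : X -> X -> R) (g : X -> X) (u : X) : X -> X -> R :=
  fun v w => ip ('d g u v) w.

Definition quadratic_with (E : X -> R) (a : X -> X -> R) : Prop :=
  exists (l : X -> R) (c0 : R),
    [/\ forall (c : R) x y, l (c *: x + y) = c * l x + l y,
        continuous l
      & forall u, E u = a u u / 2 + l u + c0].

Definition is_projection (b : X -> X -> R) (V : set X) (x y : X) : Prop :=
  V y /\ forall z, V z -> b y z = b x z.

Context {p : nat}.

Definition partial_param (P : 'cV[R]_p -> X) (th : 'cV[R]_p) (i : 'I_p) : X :=
  'd P th (delta_mx i 0).

Definition tangent_space (P : 'cV[R]_p -> X) (th : 'cV[R]_p) : set X :=
  [set x | exists c : 'cV[R]_p, x = \sum_i c i 0 *: partial_param P th i].

Definition euclid_grad (L : 'cV[R]_p -> R) (th : 'cV[R]_p) : 'cV[R]_p :=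
  \col_i 'd L th (delta_mx i 0).

Definition energy_gram (ip : X -> X -> R) (g : X -> X) (P : 'cV[R]_p -> X)
    (th : 'cV[R]_p) : 'M[R]_p :=
  \matrix_(i, j) hessian ip g (P th) (partial_param P th i) (partial_param P th j).

Definition is_pinv (A B : 'M[R]_p) : Prop := A *m B *m A = A.

End Defs.

(* Main.v *)
Require Import Defs.
From HB Require Import structures.
From mathcomp Require Import all_boot all_order all_algebra.
From mathcomp Require Import all_classical all_reals all_analysis.
From mathcomp Require Import ring lra.
Import Order.TTheory GRing.Theory Num.Theory.
Import numFieldNormedType.Exports.
Local Open Scope classical_set_scope.
Local Open Scope ring_scope.
Set Implicit Arguments. Unset Strict Implicit. Unset Printing Implicit Defensive.
Section Forms.
Context {R : realType} {X : normedModType R}.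

Definition lin1 (H : X -> X -> R) :=
  forall (c : R) x y z, H (c *: x + y) z = c * H x z + H y z.

Variables (H : X -> X -> R) (hl : lin1 H).

Lemma H0l z : H 0 z = 0.
Proof.
have := hl 1 0 0 z; rewrite scaler0 addr0 mul1r => h.
by apply: (addrI (H 0 z)); rewrite addr0 -h.
Qed.

Lemma HZl c x z : H (c *: x) z = c * H x z.
Proof. by have := hl c x 0 z; rewrite addr0 H0l addr0. Qed.

Lemma HDl x y z : H (x + y) z = H x z + H y z.
Proof. by have := hl 1 x y z; rewrite scale1r mul1r. Qed.

Lemma HNl x z : H (- x) z = - H x z.
Proof. by rewrite -scaleN1r HZl mulN1r. Qed.

Lemma HBl x y z : H (x - y) z = H x z - H y z.
Proof. by rewrite HDl HNl. Qed.

Lemma Hsuml n (c : 'I_n -> R) (v : 'I_n -> X) z :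
  H (\sum_i c i *: v i) z = \sum_i c i * H (v i) z.
Proof.
elim/big_rec2: _ => [|i s y _ <-]; first exact: H0l.
by rewrite hl.
Qed.

Hypothesis hs : forall x y, H x y = H y x.

Lemma HZr c x z : H z (c *: x) = c * H z x.
Proof. by rewrite hs HZl hs. Qed.
Lemma HDr x y z : H z (x + y) = H z x + H z y.
Proof. by rewrite hs HDl !(hs z). Qed.
Lemma HNr x z : H z (- x) = - H z x.
Proof. by rewrite hs HNl hs. Qed.
Lemma HBr x y z : H z (x - y) = H z x - H z y.
Proof. by rewrite hs HBl !(hs z). Qed.
Lemma H0r z : H z 0 = 0.
Proof. by rewrite hs H0l. Qed.
Lemma Hsumr n (c : 'I_n -> R) (v : 'I_n -> X) z :
  H z (\sum_i c i *: v i) = \sum_i c i * H z (v i).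
Proof. by rewrite hs Hsuml; apply: eq_bigr => i _; rewrite hs. Qed.

End Forms.

Section IP.
Context {R : realType} {X : normedModType R} (ip : X -> X -> R)
  (hip : is_inner_product ip).

Lemma ip_lin1 : lin1 ip.
Proof. by case: hip. Qed.
Lemma ipC x y : ip x y = ip y x.
Proof. by case: hip. Qed.
Lemma ipxx x : ip x x = `|x| ^+ 2.
Proof. by case: hip. Qed.

Lemma ip_CS x y : `|ip x y| <= `|x| * `|y|.
Proof.
have [->|y0] := eqVneq y 0.
  by rewrite (H0r ip_lin1 ipC) normr0 normr0 mulr0.
have Y0 : 0 < `|y| ^+ 2 by rewrite exprn_gt0 // normr_gt0.
set a := ip x y; set t := a / `|y| ^+ 2.
have h : 0 <= ip (x - t *: y) (x - t *: y) by rewrite ipxx sqr_ge0.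
rewrite (HBl ip_lin1) !(HBr ip_lin1 ipC) (HZl ip_lin1) !(HZr ip_lin1 ipC) in h.
rewrite (HZl ip_lin1) !ipxx (ipC y x) -/a in h.
have e : t * `|y| ^+ 2 = a by rewrite /t divfK // gt_eqF.
have h2 : a ^+ 2 <= (`|x| * `|y|) ^+ 2.
  rewrite e in h.
  have h1 : 0 <= `|x| ^+ 2 - t * a by lra.
  have F1 : t * a * `|y| ^+ 2 = a ^+ 2 by rewrite mulrAC e expr2.
  have := mulr_ge0 h1 (ltW Y0); rewrite exprMn mulrBl F1; lra.
have P : 0 <= `|x| * `|y| by rewrite mulr_ge0.
move: h2 P; set b := `|x| * `|y| => h2 P.
rewrite ler_norml; apply/andP; split; nra.
Qed.
End IP.
Section Core.
Context {R : realType} {X : normedModType R}.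
Variables (H : X -> X -> R) (hl : lin1 H) (hs : forall x y, H x y = H y x)
  (hnd : forall x, H x x = 0 -> x = 0).

Lemma core_proj (p : nat) (d : 'I_p -> X) (Gp : 'M[R]_p)
  (hG : is_pinv (\matrix_(i, j) H (d i) (d j)) Gp) (w : X) :
  is_projection H [set x | exists c : 'cV[R]_p, x = \sum_i c i 0 *: d i] w
    (\sum_i (Gp *m \col_i H w (d i)) i 0 *: d i).
Proof.
set G := \matrix_(i, j) H (d i) (d j).
set b := \col_i H w (d i).
have GT : G^T = G by apply/matrixP => i j; rewrite !mxE hs.
have [D eD] : exists D, b = G *m D.
  suff /submxP [D eD] : (b^T <= G)%MS.
    by exists D^T; rewrite -GT -trmx_mul -eD trmxK.
  rewrite submxE; set K := cokermx G.
  have GK : G *m K = 0 by exact: mulmx_coker.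
  apply/eqP/matrixP => i j; rewrite !mxE.
  set x := \sum_k K k j *: d k.
  have x0 : x = 0.
    apply: hnd; rewrite /x (Hsuml hl) big1 // => k _.
    rewrite (Hsumr hl hs).
    have -> : \sum_l K l j * H (d k) (d l) = (G *m K) k j.
      by rewrite mxE; apply: eq_bigr => l _; rewrite !mxE mulrC.
    by rewrite GK [X in _ * X]mxE mulr0.
  have : H w x = 0 by rewrite x0 (H0r hl hs).
  rewrite /x (Hsumr hl hs) => e; apply: etrans e; apply: eq_bigr => k _; rewrite !mxE; ring.
split; first by eexists.
move=> z [e ->]; rewrite !(Hsumr hl hs); apply: eq_bigr => j _; congr (_ * _).
rewrite (Hsuml hl).
have -> : \sum_i (Gp *m b) i 0 * H (d i) (d j) = (G^T *m (Gp *m b)) j 0.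
  by rewrite !mxE; apply: eq_bigr => i _; rewrite !mxE mulrC.
rewrite GT eD !mulmxA; move: hG; rewrite /is_pinv -/G => ->.
by rewrite -eD mxE.
Qed.
End Core.
Section Glue.
Context {R : realType} {X : normedModType R} {p : nat}.

Lemma dP_sum (P : 'cV[R]_p -> X) th (c : 'cV[R]_p) :
  'd P th c = \sum_i c i 0 *: partial_param P th i.
Proof.
rewrite {1}(matrix_sum_delta c) linear_sum; apply: eq_bigr => i _.
by rewrite big_ord1 linearZ.
Qed.

Lemma grad_comp (ip : X -> X -> R) E gE (hgrad : is_gradient ip E gE)
  (P : 'cV[R]_p -> X) th (hP : differentiable P th) :
  euclid_grad (E \o P) th = \col_i ip (gE (P th)) (partial_param P th i).
Proof.
apply/matrixP => i j; rewrite !mxE.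
have [dE hE] := hgrad (P th).
by rewrite diff_comp //= hE.
Qed.
End Glue.
Section DLim.
Context {R : realType} {X W : normedModType R}.
Lemma d_from_lim (f : X -> W) u v (q : W) (g : R -> W) :
  differentiable f u ->
  (forall h : R, h != 0 -> h^-1 *: (f (h *: v + u) - f u) = g h) ->
  g @ (0:R)^' --> q -> 'd f u v = q.
Proof.
move=> df eg cg; rewrite -deriveE // /derive; apply: cvg_lim => //.
apply: cvg_trans cg; apply: near_eq_cvg; near=> h.
rewrite /= eg //; near: h; exact: nbhs_dnbhs_neq.
Unshelve. all: end_near. Qed.

Lemma lin_cvg (al be : R) : (fun h : R => al + h * be) @ (0:R)^' --> al.
Proof.
apply: cvg_within_filter.
have := cvgD (cvg_cst al) (@cvgMr_tmp _ _ _ _ (fun h : R => h) 0 be (@cvg_id _ (nbhs (0:R)))).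
by rewrite mul0r addr0 => H; exact: H.
Qed.
End DLim.

Lemma ip_ext {R : realType} {X : normedModType R} (ip : X -> X -> R)
  (hip : is_inner_product ip) x y : (forall w, ip x w = ip y w) -> x = y.
Proof.
move=> e; apply/eqP; rewrite -subr_eq0 -normr_eq0 -sqrf_eq0 -(ipxx hip).
by rewrite (HBl (ip_lin1 hip)) e subrr.
Qed.


Section Quad.
Context {R : realType} {X : normedModType R} (ip : X -> X -> R)
  (hip : is_inner_product ip) (E : X -> R) (gE : X -> X)
  (hgrad : is_gradient ip E gE) (a : X -> X -> R) (hb : is_bilin_form a)
  (hs : symm_form a) (l : X -> R)
  (hl : forall (c : R) x y, l (c *: x + y) = c * l x + l y) (c0 : R)
  (hE : forall u, E u = a u u / 2 + l u + c0).

Let al : lin1 a := hb.1.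


Lemma quad_expand t v u :
  E (t *: v + u) - E u = t * ((a u v + l v) + t * (a v v / 2)).
Proof.
rewrite !hE hl (HDl al) !(HDr al hs) (HZl al) !(HZr al hs) (HZl al) (hs v u).
by field.
Qed.

Lemma dE_quad u v : 'd E u v = a u v + l v.
Proof.
have [dE _] := hgrad u.
apply: (d_from_lim (g := fun h => (a u v + l v) + h * (a v v / 2))) => //.
  by move=> h h0; rewrite quad_expand /= [_ *: _]mulrA mulVf // mul1r.
exact: lin_cvg.
Qed.

Lemma ip_gE_quad x v : ip (gE x) v = a x v + l v.
Proof. by have [_ <-] := hgrad x; rewrite dE_quad. Qed.

Lemma min_quad ustar : (forall u, E ustar <= E u) ->
  forall v, a ustar v + l v = 0.
Proof.
move=> hmin v; set al' := a ustar v + l v; set be := a v v / 2.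
set s := (`|be| + 1)^-1.
have nb : 0 < `|be| + 1 by have := normr_ge0 be; lra.
have s0 : 0 < s by rewrite invr_gt0.
have sb : s * be < 1.
  rewrite /s mulrC ltr_pdivrMr // mul1r.
  have := ler_norm be; lra.
have := hmin ((- al' * s) *: v + ustar).
rewrite -subr_ge0 quad_expand -/al' -/be => h.
have h1 : 0 <= - ((al' ^+ 2 * s) * (1 - s * be)).
  move: h; set t := - al' * s => h.
  have -> : - ((al' ^+ 2 * s) * (1 - s * be)) = t * (al' + t * be) by rewrite /t; ring.
  exact: h.
have q0 : 0 <= al' ^+ 2 * s by rewrite mulr_ge0 ?sqr_ge0 // ltW.
have sb' : 0 < 1 - s * be by lra.
have q1 : al' ^+ 2 * s = 0.
  apply/eqP; rewrite eq_le q0 andbT.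
  rewrite -(pmulr_lle0 _ sb'); lra.
have : al' ^+ 2 = 0 by move/eqP: q1; rewrite mulf_eq0 (gt_eqF s0) orbF => /eqP.
by move/eqP; rewrite sqrf_eq0 => /eqP.
Qed.

Variables (ustar : X) (hmin : forall u, E ustar <= E u).

Lemma gE_quad x v : ip (gE x) v = a (x - ustar) v.
Proof. by rewrite ip_gE_quad (HBl al); have := min_quad hmin v; lra. Qed.

Lemma dgE_quad (h2 : forall u, differentiable gE u) u v :
  'd gE u v = gE (v + u) - gE u.
Proof.
apply: (d_from_lim (g := fun _ => gE (v + u) - gE u)) => //; last exact: cvg_cst.
move=> h h0; apply: (ip_ext hip) => w.
rewrite (HZl (ip_lin1 hip)) !(HBl (ip_lin1 hip)) !gE_quad !(HBl al) !(HDl al) (HZl al).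
by field.
Qed.

Lemma hess_quad (h2 : forall u, differentiable gE u) u v w :
  hessian ip gE u v w = a v w.
Proof.
rewrite /hessian dgE_quad // (HBl (ip_lin1 hip)) !gE_quad !(HBl al) !(HDl al).
ring.
Qed.
End Quad.


Lemma zmod_id (V : zmodType) (x y a b e : V) :
  x - (a - e) - (y - (b - e)) = (x - y) - (a - b).
Proof.
rewrite opprB opprD opprK addrACA; congr (_ + _).
by rewrite addrC addrA subrK opprB.
Qed.

Lemma surj (R : realType) (X : completeNormedModType R)
    (ip : X -> X -> R) (hip : is_inner_product ip) (A : {linear X -> X})
    (hA : continuous A) (hc : coercive_form (fun v w => ip (A v) w)) f :
  exists w, A w = f.
Proof.
have [c [c0 hc']] := hc.
have [r r0 Br] := pinfty_ex_gt0 ((linear_boundedP A).1 (continuous_linear_bounded 0 (hA 0))).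
set M := r + c.
have M0 : 0 < M by rewrite /M; lra.
have cM : c <= M by rewrite /M; lra.
have BA x : `|A x| <= M * `|x|.
  apply: (le_trans (Br x)); apply: ler_wpM2r => //; rewrite /M; lra.
set t := c / M ^+ 2.
set k := c ^+ 2 / M ^+ 2.
have M20 : 0 < M ^+ 2 by rewrite exprn_gt0.
have k0 : 0 < k by rewrite /k divr_gt0 // exprn_gt0.
have k1 : k <= 1.
  rewrite /k ler_pdivrMr // mul1r; nra.
set q := 1 - k / 2.
have q0 : 0 <= q by rewrite /q; lra.
have q1 : q < 1 by rewrite /q; lra.
pose T := fun x : X => x - t *: (A x - f).
have key z : `|z - t *: A z| <= q * `|z|.
  have e : `|z - t *: A z| ^+ 2 = `|z| ^+ 2 - 2 * t * ip (A z) z + t ^+ 2 * `|A z| ^+ 2.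
    rewrite -!(ipxx hip) (HBl (ip_lin1 hip)) !(HBr (ip_lin1 hip) (ipC hip)).
    rewrite (HZl (ip_lin1 hip)) !(HZr (ip_lin1 hip) (ipC hip)) (ipC hip z (A z)).
    rewrite (HZl (ip_lin1 hip)); ring.
  have h1 := hc' z.
  have h2 : `|A z| ^+ 2 <= M ^+ 2 * `|z| ^+ 2.
    have := BA z; have := normr_ge0 (A z); have := normr_ge0 z; rewrite -exprMn; nra.
  have t0 : 0 <= t by rewrite /t divr_ge0 // ltW.
  have et : t * M ^+ 2 = c by rewrite /t divfK // gt_eqF.
  have ek : k * M ^+ 2 = c ^+ 2 by rewrite /k divfK // gt_eqF.
  have h3 : `|z - t *: A z| ^+ 2 <= (q * `|z|) ^+ 2.
    rewrite e [in X in _ <= X]exprMn.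
    apply: (@le_trans _ _ (`|z| ^+ 2 - 2 * t * (c * `|z| ^+ 2) + t ^+ 2 * (M ^+ 2 * `|z| ^+ 2))).
      have := ler_wpM2l t0 h1; have := ler_wpM2l (sqr_ge0 t) h2; lra.
    have -> : t ^+ 2 * (M ^+ 2 * `|z| ^+ 2) = t * c * `|z| ^+ 2.
      by rewrite -et; ring.
    have tc : t * c = k.
      by rewrite /t /k; field; rewrite gt_eqF.
    have -> : 2 * t * (c * `|z| ^+ 2) = 2 * (t * c) * `|z| ^+ 2 by ring.
    rewrite tc /q.
    have := sqr_ge0 `|z|; nra.
  have := normr_ge0 (z - t *: A z); have := normr_ge0 z.
  have := mulr_ge0 q0 (normr_ge0 z); move: h3; set L := `|z - t *: A z|; set Q := q * `|z|; nra.
have ctr : contraction (NngNum q0) (totalfun_ setT T : {fun [set: X] >-> [set: X]}).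
  split => //; move=> [x y] _ /=.
  rewrite /T.
  have -> : x - t *: (A x - f) - (y - t *: (A y - f)) = (x - y) - t *: A (x - y).
    by rewrite !scalerBr zmod_id -scalerBr -linearB.
  exact: key.
have ictr : is_contraction (totalfun_ setT T : {fun [set: X] >-> [set: X]}).
  by exists (NngNum q0).
have [w _ hw] := banach_fixed_point ictr closedT (ex_intro _ 0 I).
exists w; move: hw; rewrite /= /T => /eqP; rewrite -subr_eq0 opprB addrC subrK.
rewrite scaler_eq0 subr_eq0 (gt_eqF (divr_gt0 c0 M20)) /= => /eqP.
done.
Qed.


Section Schwarz.
Context {R : realType} {X : normedModType R} (ip : X -> X -> R)
  (hip : is_inner_product ip) (E : X -> R) (gE : X -> X)
  (hgrad : is_gradient ip E gE).

Lemma line_derive x0 v (s : R) :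
  is_derive s 1 (fun s : R => E (x0 + s *: v)) (ip (gE (x0 + s *: v)) v).
Proof.
set F := fun s : R => E (x0 + s *: v).
have dE y : differentiable E y := (hgrad y).1.
have eqf : (fun h : R => h^-1 *: ((F \o shift s) (h *: 1) - F s)) =
    (fun h : R => h^-1 *: ((E \o shift (x0 + s *: v)) (h *: v) - E (x0 + s *: v))).
  apply/funext => h; rewrite /F /= /shift [h *: 1]mulr1 scalerDl addrCA.
  by [].
have der : derivable E (x0 + s *: v) v := diff_derivable (dE _).
split.
  by rewrite /derivable eqf; exact: der.
rewrite /derive eqf.
have -> : lim ((fun h : R => h^-1 *: ((E \o shift (x0 + s *: v)) (h *: v) - E (x0 + s *: v))) @ 0^')
   = 'D_v E (x0 + s *: v) by [].
by rewrite deriveE // (hgrad _).2.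
Qed.

Lemma littleo_gE u (h2 : differentiable gE u) eps : 0 < eps ->
  exists2 d, 0 < d & forall z, `|z| < d ->
    `|gE (u + z) - gE u - 'd gE u z| <= eps * `|z|.
Proof.
move=> e0; have [_ /eqaddoP H] := (diff_locallyP _ _).1 h2.
have := H eps e0; move/nbhs_norm0P => [d d0 hd]; exists d => // z hz.
have := hd z hz; rewrite /= /shift.
move=> hz'; apply: le_trans hz'; rewrite le_eqVlt; apply/orP; left; apply/eqP.
congr (`|_|); change (gE (u + z) - gE u - 'd gE u z = gE (z + u) - (gE u + 'd gE u z)).
by rewrite opprD addrA (addrC z).
Qed.

Variables (u : X) (h2u : differentiable gE u).
Let ipl := ip_lin1 hip.

Lemma est eps d (Hr : forall z, `|z| < d -> `|gE (u + z) - gE u - 'd gE u z| <= eps * `|z|)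
  (e0 : 0 <= eps) v w h (h0 : 0 < h) (hd : h * (`|v| + `|w|) < d) :
  `|(E (u + h *: w + h *: v) - E (u + h *: v) - E (u + h *: w) + E u)
     - h ^+ 2 * ip ('d gE u w) v| <= eps * h ^+ 2 * (2 * (`|v| + `|w|) ^+ 2).
Proof.
pose g := fun s : R => E ((u + h *: w) + s *: v) - E (u + s *: v).
pose dg := fun s => ip (gE (u + h *: w + s *: v)) v - ip (gE (u + s *: v)) v.
have gd (s : R) : is_derive s (1 : R) g (dg s).
  exact: (is_deriveB (line_derive (u + h *: w) v s) (line_derive u v s)).
have gc : {within `[0, h], continuous g}.
  apply: derivable_within_continuous => x _; have [] := gd x; done.
have [xi xiI eq] := MVT h0 (fun x _ => gd x) gc.
move: xiI; rewrite in_itv /= => /andP [xi0 xih].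
rewrite /g !scale0r !addr0 subr0 in eq.
set A := 'd gE u.
set z1 := h *: w + xi *: v; set z2 := xi *: v.
set r1 := gE (u + z1) - gE u - A z1; set r2 := gE (u + z2) - gE u - A z2.
have edg : dg xi = ip r1 v - ip r2 v + h * ip (A w) v.
  rewrite /dg /r1 /r2 /z1 /z2.
  have -> : u + h *: w + xi *: v = u + (h *: w + xi *: v) by rewrite addrA.
  rewrite linearD linearZ /= !(HBl ipl) !(HDl ipl) (HZl ipl); ring.
have -> : E (u + h *: w + h *: v) - E (u + h *: v) - E (u + h *: w) + E u
   - h ^+ 2 * ip (A w) v = h * (ip r1 v - ip r2 v).
  have -> : E (u + h *: w + h *: v) - E (u + h *: v) - E (u + h *: w) + E u
     = dg xi * h by rewrite -eq; ring.
  rewrite edg; ring.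
set S := `|v| + `|w|.
have N1 : `|z1| <= h * S.
  apply: (le_trans (ler_normD _ _)); rewrite !normrZ !gtr0_norm //.
  have := normr_ge0 v; have := normr_ge0 w; rewrite /S; nra.
have N2 : `|z2| <= h * S.
  rewrite !normrZ !gtr0_norm //.
  have := normr_ge0 v; have := normr_ge0 w; rewrite /S; nra.
have b1 : `|ip r1 v| <= eps * (h * S) * `|v|.
  apply: (le_trans (ip_CS hip _ _)); apply: ler_wpM2r => //.
  apply: (le_trans (Hr _ (le_lt_trans N1 hd))); exact: ler_wpM2l.
have b2 : `|ip r2 v| <= eps * (h * S) * `|v|.
  apply: (le_trans (ip_CS hip _ _)); apply: ler_wpM2r => //.
  apply: (le_trans (Hr _ (le_lt_trans N2 hd))); exact: ler_wpM2l.
have b3 := ler_normB (ip r1 v) (ip r2 v).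
rewrite normrM gtr0_norm //.
have VS : `|v| <= S by rewrite /S; have := normr_ge0 w; lra.
have V0 := normr_ge0 v.
move: b1 b2 b3 VS V0; set x1 := `|ip r1 v|; set x2 := `|ip r2 v|;
  set y := `|ip r1 v - ip r2 v|; set V := `|v| => b1 b2 b3 VS V0.
have hy : y <= 2 * (eps * (h * S) * V) by lra.
have : h * y <= h * (2 * (eps * (h * S) * V)) by apply: ler_wpM2l => //; exact: ltW.
move/le_trans; apply.
have S0 : 0 <= S by lra.
have : eps * h * V <= eps * h * S by apply: ler_wpM2l => //; rewrite mulr_ge0 // ltW.
move=> H.
have H2 := ler_wpM2l (mulr_ge0 (mulr_ge0 (ler0n _ 2) (ltW h0)) S0) H.
have -> : h * (2 * (eps * (h * S) * V)) = 2%:R * h * S * (eps * h * V) by ring.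
have -> : eps * h ^+ 2 * (2 * S ^+ 2) = 2%:R * h * S * (eps * h * S) by ring.
exact: H2.
Qed.

Lemma schwarz_sym v w : hessian ip gE u v w = hessian ip gE u w v.
Proof.
rewrite /hessian; set A := 'd gE u.
set K := 2 * (`|v| + `|w|) ^+ 2.
have K0 : 0 <= K by rewrite /K mulr_ge0 // sqr_ge0.
have claim eps : 0 < eps -> `|ip (A w) v - ip (A v) w| <= 2 * eps * K.
  move=> e0; have [d d0 Hr] := littleo_gE h2u e0.
  set S := `|v| + `|w|.
  have S0 : 0 <= S by rewrite /S addr_ge0.
  have S1 : 0 < 2 * (S + 1) by lra.
  set h := d / (2 * (S + 1)).
  have h0 : 0 < h by rewrite /h divr_gt0.
  have hd : h * S < d.
    rewrite /h mulrAC ltr_pdivrMr // ; nra.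
  have e1 := est Hr (ltW e0) h0 hd.
  have hd' : h * (`|w| + `|v|) < d by rewrite addrC.
  have e2 := est Hr (ltW e0) h0 hd'.
  rewrite (addrC `|w|) -/S (addrAC u (h *: v)) in e2.
  move: e1 e2; rewrite -/S.
  set D1 := E _ - _ - _ + _; set D2 := E _ - _ - _ + _.
  have -> : D2 = D1 by rewrite /D1 /D2; ring.
  move=> e1 e2.
  have H0 : 0 < h ^+ 2 by rewrite exprn_gt0.
  have := ler_normB (D1 - h ^+ 2 * ip (A w) v) (D1 - h ^+ 2 * ip (A v) w).
  have -> : D1 - h ^+ 2 * ip (A w) v - (D1 - h ^+ 2 * ip (A v) w) =
    h ^+ 2 * - (ip (A w) v - ip (A v) w) by ring.
  rewrite normrM normrN gtr0_norm // => e3.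
  rewrite -(ler_pM2l H0); apply: (le_trans e3).
  rewrite /K -/S; lra.
set dd := ip (A w) v - ip (A v) w.
apply/eqP; rewrite eq_sym -subr_eq0 -/dd -normr_eq0; apply/negPn/negP => nd.
have nd' : 0 < `|dd| by rewrite lt0r nd normr_ge0.
have K1 : 0 < 4 * K + 1 by lra.
have := claim (`|dd| / (4 * K + 1)) (divr_gt0 nd' K1).
set e := `|dd| / (4 * K + 1).
have ee : e * (4 * K + 1) = `|dd| by rewrite /e divfK // gt_eqF.
move: ee; set N := `|dd| => ee hN.
have e0 : 0 < e by rewrite /e divr_gt0.
nra.
Qed.
End Schwarz.

Unset Implicit Arguments.
Local Close Scope classical_set_scope.

Theorem theorem1 (R : realType) (X : completeNormedModType R)
    (ip : X -> X -> R) (hip : is_inner_product ip)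
    (E : X -> R) (gE : X -> X) (hgrad : is_gradient ip E gE)
    (h2 : forall u, differentiable gE u) (hconv : convex_fun E)
    (p : nat) (P : 'cV[R]_p -> X) (hP : forall th, differentiable P th)
    (th : 'cV[R]_p) (Gp : 'M[R]_p)
    (hGp : is_pinv (energy_gram ip gE P th) Gp) :
  ((forall u, coercive_form (hessian ip gE u)) ->
     exists w : X, 'd gE (P th) w = gE (P th) /\
       is_projection (hessian ip gE (P th)) (tangent_space P th) w
         ('d P th (Gp *m euclid_grad (E \o P) th)))
  /\
  (forall (a : X -> X -> R) (ustar : X),
     is_bilin_form a -> symm_form a -> bounded_form a -> posdef_form a ->
     quadratic_with E a ->
     (forall u, E ustar <= E u) ->
     is_projection a (tangent_space P th) (P th - ustar)%R
       ('d P th (Gp *m euclid_grad (E \o P) th))).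
Proof.
rewrite dP_sum (grad_comp hgrad) //; split.
  move=> hcoer; set u := P th.
  have [w hw] := surj hip (@diff_continuous _ _ _ _ _ (h2 u)) (hcoer u) (gE u).
  exists w; split => //.
  set H := hessian ip gE u.
  have Hl : lin1 H.
    by move=> c x y z; rewrite /H /hessian linearP (ip_lin1 hip).
  have Hs : forall x y, H x y = H y x by move=> x y; exact: (schwarz_sym hip hgrad (h2 u)).
  have Hnd : forall x, H x x = 0 -> x = 0.
    move=> x; have [c [c0 hc]] := hcoer u; have := hc x; rewrite -/H => hx Hx.
    move: hx; rewrite Hx => hx; apply/eqP; rewrite -normr_eq0 -sqrf_eq0.
    by rewrite eq_le sqr_ge0 andbT -(pmulr_lle0 _ c0) mulrC.
  have -> : \col_i ip (gE u) (partial_param P th i) = \col_i H w (partial_param P th i).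
    by apply/matrixP => i j; rewrite !mxE /H /hessian hw.
  exact: (core_proj Hl Hs Hnd hGp).
move=> a ustar hb hs hbd hpd [l [c0 [hl _ hE]]] hmin.
have hH : hessian ip gE (P th) = a.
  by apply/funext => x; apply/funext => y; exact: (hess_quad hip hgrad hb hs hl hE hmin h2).
rewrite /energy_gram hH in hGp.
have Hnd : forall x, a x x = 0 -> x = 0.
  move=> x ax; apply/eqP; apply/negPn/negP => /hpd; rewrite ax ltxx.
  done.
have -> : \col_i ip (gE (P th)) (partial_param P th i) = \col_i a (P th - ustar) (partial_param P th i).
  by apply/matrixP => i j; rewrite !mxE (gE_quad hgrad hb hs hl hE hmin).
exact: (core_proj hb.1 hs Hnd hGp).
Qed.
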